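(* Let $\lambda=(\lambda_1,\dots,\lambda_r)$ be a partition of $n\ge1$. The Sprague–Grundy value $\mathbb{SG}(\mathcal{L}(\lambda))$ can be computed in $O(\log r)\le O(\log n)$ time units.
   Context: A partition of $n$ is a non-increasing sequence $\lambda_1\ge\dots\ge\lambda_r>0$ of integers with sum $n$, given as input as the list $(\lambda_1,\dots,\lambda_r)$ with random access to its entries; $()$ is the empty partition. For non-negative $i,j$, $\lambda[i,j]$ is $(\lambda_{i+1}-j,\dots,\lambda_r-j)$ with all non-positive entries removed. LCTR: positions $\mathcal{L}(\mu)$; if $\mu\neq()$ the two moves go to $\mathcal{L}(\mu[1,0])$ and $\mathcal{L}(\mu[0,1])$; $\mathcal{L}(())$ is terminal. Normal play; $\mathbb{SG}(A)=\operatorname{mex}\{\mathbb{SG}(B):A\to B\}$. A time unit is any of: reading one integer (entry) of the input, one basic arithmetic operation on integers (addition, subtraction, multiplication or division by 2, parity, comparison), or computing the mex of a set of at most two integers from $\{0,1,2\}$. *)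

(* Defs.v *)
From mathcomp Require Import all_boot all_order all_algebra.
Set Implicit Arguments. Unset Strict Implicit. Unset Printing Implicit Defensive.
Import Order.TTheory GRing.Theory Num.Theory.

Definition is_partition (n : nat) (lam : seq nat) : bool :=
  [&& sorted geq lam, all (fun x => 0 < x) lam & sumn lam == n].

(* lam[i,j] = (lam_{i+1}-j, ..., lam_r-j) with non-positive entries removed *)
Definition pshift (lam : seq nat) (i j : nat) : seq nat :=
  [seq (x - j)%N | x <- drop i lam & (j < x)%N].

Definition mex (s : seq nat) : nat :=
  find (fun k => k \notin s) (iota 0 (size s).+1).

(* Sprague-Grundy value with fuel; each move strictly decreases the sum of
   the partition, so fuel = sumn mu suffices. *)
Fixpoint sg_fuel (fuel : nat) (mu : seq nat) : nat :=
  match fuel with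
  | 0 => 0
  | f.+1 => if mu is [::] then 0
            else mex [:: sg_fuel f (pshift mu 1 0); sg_fuel f (pshift mu 0 1)]
  end.

Definition SG_LCTR (mu : seq nat) : nat := sg_fuel (sumn mu) mu.

(* Registers hold integers.  Every executed instruction costs one time unit. *)
Inductive instr : Type :=
| ILen  (d : nat)
| IRead (d s : nat)          (* reg d := lam_{reg s} (1-indexed), 0 if out of range *)
| IConst (d : nat) (c : int)
| IAdd (d a b : nat)
| ISub (d a b : nat)
| IMul (d a b : nat)
| IHalf (d a : nat)
| IPar (d a : nat)
| IMex (d a b : nat)
| IJlt (a b l : nat)
| IJmp (l : nat)
| IHalt (s : nat).

Definition program := seq instr.

Inductive config : Type :=
| Run (pc : nat) (regs : nat -> int)
| Done (v : int).

Definition upd (R : nat -> int) (d : nat) (v : int) : nat -> int :=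
  fun k => if k == d then v else R k.

Definition read_entry (lam : seq nat) (i : int) : int :=
  if (1 <= i)%R && (i <= Posz (size lam))%R then Posz (nth 0%N lam (absz (i - 1)))
  else 0%R.

Definition mexz (a b : int) : int :=
  Posz (mex [seq absz x | x <- [:: a; b] & (0 <= x)%R]).

Definition step (P : program) (lam : seq nat) (c : config) : config :=
  match c with
  | Done v => Done v
  | Run pc R =>
    if (pc < size P)%N then
      match nth (IHalt 0) P pc with
      | ILen d => Run pc.+1 (upd R d (Posz (size lam)))
      | IRead d s => Run pc.+1 (upd R d (read_entry lam (R s)))
      | IConst d c => Run pc.+1 (upd R d c)
      | IAdd d a b => Run pc.+1 (upd R d (R a + R b)%R)
      | ISub d a b => Run pc.+1 (upd R d (R a - R b)%R)
      | IMul d a b => Run pc.+1 (upd R d (R a * R b)%R)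
      | IHalf d a => Run pc.+1 (upd R d (R a %/ 2)%Z)
      | IPar d a => Run pc.+1 (upd R d (R a %% 2)%Z)
      | IMex d a b => Run pc.+1 (upd R d (mexz (R a) (R b)))
      | IJlt a b l => if (R a < R b)%R then Run l R else Run pc.+1 R
      | IJmp l => Run l R
      | IHalt s => Done (R s)
      end
    else Run pc R (* invalid program counter: the machine is stuck *)
  end.

Definition init : config := Run 0 (fun _ => 0%R).

Definition halts_in (P : program) (lam : seq nat) (t : nat) (v : int) : Prop :=
  iter t (step P lam) init = Done v /\
  forall t', (t' < t)%N -> exists pc R, iter t' (step P lam) init = Run pc R.

(* Main.v *)
Require Import Defs.
From mathcomp Require Import all_boot all_order all_algebra.
From mathcomp Require Import zify.
Import Order.TTheory GRing.Theory Num.Theory.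

Definition pt (mu : seq nat) : bool := sorted geq mu && all (fun x => 0 < x) mu.
Definition Rr (mu : seq nat) (i : nat) : nat := nth 0 mu i.-1.
Definition Cc (mu : seq nat) (j : nat) : nat := count (fun x => j <= x) mu.

Lemma pshift10 mu : pt mu -> pshift mu 1 0 = behead mu.
Proof.
case/andP=> _ Hp; rewrite /pshift drop1.
have Hb : all (fun x => 0 < x) (behead mu) by case: mu Hp => //= x s /andP[].
rewrite (all_filterP Hb); elim: (behead mu) => //= x s ->; by rewrite subn0.
Qed.

Lemma pshift01 mu : pshift mu 0 1 = [seq x - 1 | x <- mu & 1 < x].
Proof. by rewrite /pshift drop0. Qed.

Lemma sorted_cons_all x s : sorted geq (x :: s) -> all (fun y => y <= x) s.
Proof.
move=> H; have Htr : transitive geq by move=> a b c H1 H2; exact: leq_trans H2 H1.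
exact: (order_path_min Htr H).
Qed.

Arguments sorted_cons_all {x s}.

Lemma pt_behead mu : pt mu -> pt (behead mu).
Proof.
case: mu => //= x s /andP[H1 /andP[_ H2]]; apply/andP; split => //.
exact: path_sorted H1.
Qed.

Lemma pt_shift01 mu : pt mu -> pt [seq x - 1 | x <- mu & 1 < x].
Proof.
case/andP=> H1 _; apply/andP; split.
  have Htr : transitive geq by move=> a b c Ha Hb; exact: leq_trans Hb Ha.
  rewrite sorted_map; apply: (sub_sorted _ (sorted_filter Htr _ H1)).
  by move=> a b /=; rewrite /geq => Hab; lia.
apply/allP => y /mapP[x]; rewrite mem_filter => /andP[Hx _] ->; lia.
Qed.

Lemma sumn_behead mu : pt mu -> mu != [::] -> sumn (behead mu) < sumn mu.
Proof. by case: mu => //= x s /andP[_ /andP[Hx _]]; lia. Qed.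

Lemma sumn_shift01_le mu : sumn [seq x - 1 | x <- mu & 1 < x] <= sumn mu.
Proof. elim: mu => //= x s IH; case: ifP => _ /=; lia. Qed.

Lemma sumn_shift01 mu : pt mu -> mu != [::] -> sumn [seq x - 1 | x <- mu & 1 < x] < sumn mu.
Proof.
case: mu => //= x s /andP[_ /andP[Hx _]] _.
have := sumn_shift01_le s; case: ifP => _ /=; lia.
Qed.

Lemma pt_nil_sum mu : pt mu -> (sumn mu == 0) = (mu == [::]).
Proof. by case: mu => //= x s /andP[_ /andP[Hx _]]; apply/negbTE; lia. Qed.

Arguments sumn_behead {mu}.
Arguments sumn_shift01 {mu}.
Arguments pt_behead {mu}.
Arguments pt_shift01 {mu}.
Arguments pshift10 {mu}.

Lemma sg_fuel_nil f : sg_fuel f [::] = 0.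
Proof. by case: f. Qed.

Lemma sg_fuel_ok f : forall mu g, pt mu -> sumn mu <= f -> sumn mu <= g ->
  sg_fuel f mu = sg_fuel g mu.
Proof.
elim: f => [|f IH] mu g Hmu Hf Hg.
  have : mu == [::] by rewrite -pt_nil_sum //; lia.
  by move/eqP->; rewrite !sg_fuel_nil.
case: mu Hmu Hf Hg => [|x s] Hmu Hf Hg; first by rewrite !sg_fuel_nil.
case: g Hg => [|g] Hg.
  by move: Hmu Hg => /andP[_ /andP[Hx _]] /=; lia.
have Hne : x :: s != [::] by [].
have S1 := sumn_behead Hmu Hne.
have S2 := sumn_shift01 Hmu Hne.
rewrite /= -/(pshift (x :: s) 1 0) -/(pshift (x :: s) 0 1).
rewrite pshift10 // pshift01.
rewrite (IH _ g) ?(IH [seq _ - 1 | _ <- _ & _] g) //.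
all: first [exact: (pt_shift01 Hmu) | exact: (pt_behead Hmu) | (move: S1 S2 Hf Hg; rewrite /=; lia)].
Qed.

Lemma SG_rec mu : pt mu -> mu != [::] ->
  SG_LCTR mu = mex [:: SG_LCTR (behead mu); SG_LCTR [seq x - 1 | x <- mu & 1 < x]].
Proof.
move=> Hmu Hne.
have S1 := sumn_behead Hmu Hne; have S2 := sumn_shift01 Hmu Hne.
rewrite /SG_LCTR.
case Es: (sumn mu) => [|s].
  by move: S1; rewrite Es.
case: mu Hmu Hne S1 S2 Es => // x l Hmu _ S1 S2 Es.
rewrite /= -/(pshift (x :: l) 1 0) -/(pshift (x :: l) 0 1) pshift10 // pshift01.
rewrite (sg_fuel_ok (sumn (behead (x :: l))) _ s) ?(sg_fuel_ok (sumn [seq _ - 1 | _ <- x :: l & _]) _ s) //.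
all: first [exact: (pt_shift01 Hmu) | exact: (pt_behead Hmu) | (move: S1 S2; rewrite Es /=; lia)].
Qed.

Lemma all_le_nth x s k : all (fun y => y <= x) s -> nth 0 s k <= x.
Proof.
move=> Hall; case: (ltnP k (size s)) => H.
  exact: (allP Hall) _ (mem_nth 0 H).
by rewrite nth_default.
Qed.

Arguments all_le_nth {x s} k.

Lemma all_lt_count x j s : all (fun y => y <= x) s -> x < j -> count (fun y => j <= y) s = 0.
Proof. elim: s => //= y s IH /andP[Hy Hs] Hx; rewrite IH //; lia. Qed.

Arguments all_lt_count {x j s}.

Lemma all_le1_filter s : all (fun y => y <= 1) s -> [seq y - 1 | y <- s & 1 < y] = [::].
Proof. elim: s => //= y s IH /andP[Hy Hs]; case: ifP => H /=; [lia | exact: IH]. Qed.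

Lemma Rr_behead mu i : 0 < i -> Rr (behead mu) i = Rr mu i.+1.
Proof. by case: i => // i _; rewrite /Rr /= nth_behead. Qed.

Lemma Cc_behead mu j : pt mu -> 0 < j -> Cc (behead mu) j = Cc mu j - 1.
Proof.
case: mu => //= x s /andP[Hs _] Hj; rewrite /Cc /=.
case: (leqP j x) => Hjx /=; first lia.
by rewrite (all_lt_count (sorted_cons_all Hs)).
Qed.

Lemma nth_shift01 mu k : pt mu -> nth 0 [seq x - 1 | x <- mu & 1 < x] k = nth 0 mu k - 1.
Proof.
elim: mu k => [|x s IH] k; first by rewrite !nth_nil.
move=> Hmu; have Hs : pt s by exact: (pt_behead Hmu).
case/andP: Hmu => Hsort _; have Hall := sorted_cons_all Hsort.
rewrite /=; case: ifP => Hx.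
  by case: k => [|k] //=; rewrite IH.
have Hall1 : all (fun y => y <= 1) s.
  by apply/allP => y Hy; have := (allP Hall) y Hy; lia.
rewrite all_le1_filter // nth_nil.
case: k => [|k] /=; first lia.
have := all_le_nth k Hall; lia.
Qed.

Lemma Rr_shift01 mu i : pt mu -> Rr [seq x - 1 | x <- mu & 1 < x] i = Rr mu i - 1.
Proof. by move=> H; rewrite /Rr nth_shift01. Qed.

Lemma Cc_shift01 mu j : 0 < j -> Cc [seq x - 1 | x <- mu & 1 < x] j = Cc mu j.+1.
Proof.
move=> Hj; rewrite /Cc; elim: mu => //= x s IH.
case: ifP => Hx /=; rewrite IH; lia.
Qed.

Lemma sorted_nth_le mu k : sorted geq mu -> nth 0 mu k.+1 <= nth 0 mu k.
Proof.
elim: mu k => //= x s IH [|k] Hs.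
  exact: all_le_nth (sorted_cons_all Hs).
by apply: IH; exact: path_sorted Hs.
Qed.

Lemma Rr_monoB mu k : pt mu -> Rr mu k <= Rr mu (k - 1).
Proof.
case/andP=> Hs _; case: k => [|[|k]] //=; rewrite /Rr ?subn1 /=; exact: sorted_nth_le.
Qed.

Lemma Rr_mono mu k : pt mu -> Rr mu k.+1 <= Rr mu k.
Proof. by move=> H; have := Rr_monoB mu k.+1 H; rewrite subn1. Qed.

Lemma Cc_monoB mu k : Cc mu k <= Cc mu (k - 1).
Proof. rewrite /Cc; apply: sub_count => y /=; lia. Qed.

Lemma Cc_mono mu k : Cc mu k.+1 <= Cc mu k.
Proof. by have := Cc_monoB mu k.+1; rewrite subn1. Qed.

Lemma conjP mu i j : pt mu -> 0 < i -> 0 < j -> (j <= Rr mu i) = (i <= Cc mu j).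
Proof.
elim: mu i => [|x s IH] i Hmu Hi Hj.
  by rewrite /Rr /Cc nth_nil /=; apply/idP/idP; lia.
have Hs : pt s by exact: (pt_behead Hmu).
case/andP: Hmu => Hsort _; have Hall := sorted_cons_all Hsort.
rewrite /Cc /=; case: i Hi => [|[|k]] // _.
  rewrite /Rr /=; case: (leqP j x) => Hjx /=; first lia.
  rewrite (all_lt_count Hall Hjx); lia.
have -> : Rr (x :: s) k.+2 = Rr s k.+1 by [].
rewrite IH //; rewrite -/(Cc s j).
case: (leqP j x) => Hjx /=; first lia.
rewrite /Cc (all_lt_count Hall Hjx); lia.
Qed.

Definition Gm (d x0 x1 x2 y1 y2 : nat) : nat :=
  if (x0 - d) %% 2 == 1 then
    (if d == 1 then 2 else if x0 < x1 then (if d < y1 then 2 else 0)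
     else if d < y1 then 1 else if d <= 2 then 2 else if y1 < y2 then 2 else 1)
  else (if d == 1 then 1 else if x0 < x1 then 1 else if d < y1 then 1 else 0).

Definition Fm (d x2 x1 x0 y2 y1 y0 : nat) : nat :=
  if d == 0 then 0 else
  if d < x0 then (if d < y0 then 0 else Gm d x0 x1 x2 y1 y2) else
  if d < y0 then Gm d y0 y1 y2 x1 x2 else
  if d == 1 then 1 else if x0 < x1 then 1 else if y0 < y1 then 1 else 0.

Lemma Fm_congr d x2 x1 x0 y2 y1 y0 x2' x1' y2' y1' :
  (2 < d -> x2 = x2') -> (2 < d -> y2 = y2') -> (1 < d -> x1 = x1') -> (1 < d -> y1 = y1') ->
  Fm d x2 x1 x0 y2 y1 y0 = Fm d x2' x1' x0 y2' y1' y0.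
Proof.
case: d => [|[|[|d]]] H1 H2 H3 H4 //.
  by rewrite /Fm /Gm !(H3, H4).
by rewrite /Fm /Gm !(H1, H2, H3, H4).
Qed.

Ltac crush := repeat (case: ifP => ?; try (exfalso; lia)); by [].

Lemma abs_step d r3 r2 r1 r0 rp c3 c2 c1 c0 cp :
  0 < d -> rp <= r0 -> r0 <= r1 -> r1 <= r2 -> r2 <= r3 ->
  cp <= c0 -> c0 <= c1 -> c1 <= c2 -> c2 <= c3 ->
  d <= r0 -> rp <= d -> d <= c0 -> cp <= d -> (d <= rp) = (d < c0) -> (d <= cp) = (d < r0) ->
  Fm d r2 r1 r0 c2 c1 c0 =
  mex [:: if d < c0 then Fm d r1 r0 rp (c2-1) (c1-1) (c0-1)
          else Fm d.-1 r2 r1 r0 (c3-1) (c2-1) (c1-1);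
          if d < r0 then Fm d (r2-1) (r1-1) (r0-1) c1 c0 cp
          else Fm d.-1 (r3-1) (r2-1) (r1-1) c2 c1 c0].
Proof.
move=> H0 *.
case: (ltnP d c0) => Hc; case: (ltnP d r0) => Hr; rewrite /Fm /Gm.
all: crush.
Qed.

Definition FF mu d := Fm d (Rr mu (d-2)) (Rr mu (d-1)) (Rr mu d) (Cc mu (d-2)) (Cc mu (d-1)) (Cc mu d).

Lemma nonempty_of_R mu d : 0 < d -> d <= Rr mu d -> mu != [::].
Proof. by case: mu => // H1 H2; rewrite /Rr nth_nil in H2 *; lia. Qed.

Arguments nonempty_of_R {mu d}.

Lemma Rr_behead' mu i i' : 0 < i -> i' = i.+1 -> Rr (behead mu) i = Rr mu i'.
Proof. by move=> H ->; rewrite Rr_behead. Qed.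
Lemma Cc_behead' mu j j' : pt mu -> 0 < j -> j' = j -> Cc (behead mu) j = Cc mu j' - 1.
Proof. by move=> H1 H2 ->; rewrite Cc_behead. Qed.
Lemma Rr_shift' mu i i' : pt mu -> i' = i -> Rr [seq x - 1 | x <- mu & 1 < x] i = Rr mu i' - 1.
Proof. by move=> H ->; rewrite Rr_shift01. Qed.
Lemma Cc_shift' mu j j' : 0 < j -> j' = j.+1 -> Cc [seq x - 1 | x <- mu & 1 < x] j = Cc mu j'.
Proof. by move=> H ->; rewrite Cc_shift01. Qed.
Ltac sides := first [ (apply: Rr_behead'; lia) | (apply: Cc_behead' => //; lia)
  | (apply: Rr_shift' => //; lia) | (apply: Cc_shift'; lia) ].


Lemma SG_Fm mu d : pt mu -> 0 < d -> d <= Rr mu d -> Rr mu d.+1 <= d -> SG_LCTR mu = FF mu d.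
Proof.
have [n Hn] := ubnP (sumn mu); elim: n mu d Hn => // n IH mu d Hn Hmu Hd H1 H2.
have Hne := nonempty_of_R Hd H1.
rewrite SG_rec //.
have S1 := sumn_behead Hmu Hne; have S2 := sumn_shift01 Hmu Hne.
set c1 := behead mu; set c2 := [seq x - 1 | x <- mu & 1 < x].
have P1 : pt c1 := pt_behead Hmu. have P2 : pt c2 := pt_shift01 Hmu.
have Hr0 : Rr mu d.+1 <= Rr mu d := Rr_mono mu d Hmu.
have Ec0 : (d <= Rr mu d.+1) = (d < Cc mu d) by rewrite conjP.
have Ecp : (d.+1 <= Rr mu d) = (d <= Cc mu d.+1) by rewrite conjP.
have Hc0 : d <= Cc mu d by rewrite -conjP.
have Hcp : Cc mu d.+1 <= d.
  have := conjP mu d.+1 d.+1 Hmu erefl erefl; case: (leqP d.+1 (Cc mu d.+1)) => //; lia.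
have E1 : SG_LCTR c1 = if d < Cc mu d then
    Fm d (Rr mu (d-1)) (Rr mu d) (Rr mu d.+1) (Cc mu (d-2) - 1) (Cc mu (d-1) - 1) (Cc mu d - 1)
  else Fm d.-1 (Rr mu (d-2)) (Rr mu (d-1)) (Rr mu d) (Cc mu (d-3) - 1) (Cc mu (d-2) - 1) (Cc mu (d-1) - 1).
  case: ifP => Hc.
    have HA1 : d <= Rr c1 d by rewrite /c1 Rr_behead // Ec0.
    have HA2 : Rr c1 d.+1 <= d by rewrite /c1 Rr_behead //; have := Rr_mono mu d.+1 Hmu; lia.
    have HA3 : sumn c1 < n by rewrite /c1; move: S1 Hn; lia.
    rewrite (IH c1 d) //.
    rewrite /FF /c1 (Rr_behead mu d Hd) (Cc_behead mu d Hmu Hd).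
    apply: Fm_congr => Hdd; sides.
  case: (eqVneq d 1) => Hd1.
    have -> : c1 = [::].
      move: Hc; rewrite Hd1 /c1 /Cc.
      case: mu Hmu Hne {IH Hn H1 H2 S1 S2 P1 P2 Hr0 Ec0 Ecp Hc0 Hcp c1 c2} => // x [|y s] //= /andP[_ /andP[Hx /andP[Hy _]]].
      lia.
    by rewrite Hd1.
  have HA0 : 0 < d.-1 by lia.
  have HA1 : d.-1 <= Rr c1 d.-1 by rewrite /c1 Rr_behead ?prednK //; lia.
  have HA2 : Rr c1 d.-1.+1 <= d.-1 by rewrite /c1 Rr_behead ?prednK //; move: Hc; rewrite -Ec0; lia.
  have HA3 : sumn c1 < n by rewrite /c1; move: S1 Hn; lia.
  rewrite (IH c1 d.-1) //.
  rewrite /FF /c1 (Rr_behead' mu d.-1 d HA0) ?prednK // (Cc_behead' mu d.-1 (d-1) Hmu HA0); last lia.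
  apply: Fm_congr => Hdd; sides.
have E2 : SG_LCTR c2 = if d < Rr mu d then
    Fm d (Rr mu (d-2) - 1) (Rr mu (d-1) - 1) (Rr mu d - 1) (Cc mu (d-1)) (Cc mu d) (Cc mu d.+1)
  else Fm d.-1 (Rr mu (d-3) - 1) (Rr mu (d-2) - 1) (Rr mu (d-1) - 1) (Cc mu (d-2)) (Cc mu (d-1)) (Cc mu d).
  case: ifP => Hr.
    have HA1 : d <= Rr c2 d by rewrite /c2 Rr_shift01 //; lia.
    have HA2 : Rr c2 d.+1 <= d by rewrite /c2 Rr_shift01 //; lia.
    have HA3 : sumn c2 < n by rewrite /c2; move: S2 Hn; lia.
    rewrite (IH c2 d) //.
    rewrite /FF /c2 (Rr_shift01 mu d Hmu) (Cc_shift01 mu d Hd).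
    apply: Fm_congr => Hdd; sides.
  case: (eqVneq d 1) => Hd1.
    have -> : c2 = [::].
      move: Hr H1; rewrite Hd1 /c2 /Rr /=.
      case: mu Hmu Hne {IH Hn H2 S1 S2 P1 P2 Hr0 Ec0 Ecp Hc0 Hcp E1 c1 c2} => // x s /andP[Hs _] _ /= Hx1 Hx2.
      have Hx : x = 1 by lia.
      rewrite ifF; last by lia.
      apply: all_le1_filter; apply/allP => y Hy; have := (allP (sorted_cons_all Hs)) y Hy; lia.
    by rewrite Hd1.
  have HA0 : 0 < d.-1 by lia.
  have HA1 : d.-1 <= Rr c2 d.-1 by rewrite /c2 Rr_shift01 //; have := Rr_monoB mu d Hmu; rewrite subn1; lia.
  have HA2 : Rr c2 d.-1.+1 <= d.-1 by rewrite /c2 Rr_shift01 // prednK //; lia.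
  have HA3 : sumn c2 < n by rewrite /c2; move: S2 Hn; lia.
  rewrite (IH c2 d.-1) //.
  rewrite /FF /c2 (Rr_shift' mu d.-1 (d-1) Hmu) ?(Cc_shift' mu d.-1 d HA0) ?prednK //; last lia.
  apply: Fm_congr => Hdd; sides.
rewrite E1 E2 /FF.
have M1 := Rr_mono mu d Hmu.
have M2 := Rr_monoB mu d Hmu.
have M3 : Rr mu (d-1) <= Rr mu (d-2).
  by have := Rr_monoB mu (d-1) Hmu; rewrite (_ : d - 1 - 1 = d - 2) //; lia.
have M4 : Rr mu (d-2) <= Rr mu (d-3).
  by have := Rr_monoB mu (d-2) Hmu; rewrite (_ : d - 2 - 1 = d - 3) //; lia.
have N1 := Cc_mono mu d.
have N2 := Cc_monoB mu d.
have N3 : Cc mu (d-1) <= Cc mu (d-2).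
  by have := Cc_monoB mu (d-1); rewrite (_ : d - 1 - 1 = d - 2) //; lia.
have N4 : Cc mu (d-2) <= Cc mu (d-3).
  by have := Cc_monoB mu (d-2); rewrite (_ : d - 2 - 1 = d - 3) //; lia.
symmetry; apply: abs_step => //.
Qed.

Definition exec (i : instr) (lam : seq nat) (pc : nat) (R : nat -> int) : config :=
  match i with
  | ILen d => Run pc.+1 (upd R d (Posz (size lam)))
  | IRead d s => Run pc.+1 (upd R d (read_entry lam (R s)))
  | IConst d c => Run pc.+1 (upd R d c)
  | IAdd d a b => Run pc.+1 (upd R d (R a + R b)%R)
  | ISub d a b => Run pc.+1 (upd R d (R a - R b)%R)
  | IMul d a b => Run pc.+1 (upd R d (R a * R b)%R)
  | IHalf d a => Run pc.+1 (upd R d (R a %/ 2)%Z)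
  | IPar d a => Run pc.+1 (upd R d (R a %% 2)%Z)
  | IMex d a b => Run pc.+1 (upd R d (mexz (R a) (R b)))
  | IJlt a b l => if (R a < R b)%R then Run l R else Run pc.+1 R
  | IJmp l => Run l R
  | IHalt s => Done (R s)
  end.

Lemma step_run P lam pc R : pc < size P -> step P lam (Run pc R) = exec (nth (IHalt 0) P pc) lam pc R.
Proof. by rewrite /step => ->. Qed.

Definition reach P lam c k c' :=
  iter k (step P lam) c = c' /\
  forall t, t < k -> exists pc R, iter t (step P lam) c = Run pc R.

Definition reachB P lam c B c' := exists k, k <= B /\ reach P lam c k c'.


Lemma reach0 P lam c : reach P lam c 0 c.
Proof. by split. Qed.

Lemma reach_S P lam pc R k c' :
  reach P lam (step P lam (Run pc R)) k c' -> reach P lam (Run pc R) k.+1 c'.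
Proof.
case=> H1 H2; split; first by rewrite iterSr.
case=> [|t] Ht; first by exists pc, R.
by have [pc' [R' E]] := H2 t Ht; exists pc', R'; rewrite iterSr.
Qed.

Lemma reach_trans P lam c k1 c1 k2 c2 :
  reach P lam c k1 c1 -> reach P lam c1 k2 c2 -> reach P lam c (k2 + k1) c2.
Proof.
case=> A1 A2 [B1 B2]; split; first by rewrite iterD A1.
move=> t Ht; case: (ltnP t k1) => Htk; first exact: A2.
have [pc [R E]] := B2 (t - k1) ltac:(lia).
exists pc, R; rewrite -(subnK Htk) iterD A1; exact: E.
Qed.

Lemma reachB0 P lam c B : reachB P lam c B c.
Proof. by exists 0; split => //; exact: reach0. Qed.

Lemma reachB_S P lam pc R B c' :
  reachB P lam (step P lam (Run pc R)) B c' -> reachB P lam (Run pc R) B.+1 c'.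
Proof. by case=> k [Hk H]; exists k.+1; split => //; exact: reach_S. Qed.

Lemma reachB_trans P lam c B1 c1 B2 c2 :
  reachB P lam c B1 c1 -> reachB P lam c1 B2 c2 -> reachB P lam c (B1 + B2) c2.
Proof.
case=> k1 [H1 R1] [k2 [H2 R2]]; exists (k2 + k1); split; first lia.
exact: reach_trans R1 R2.
Qed.

Lemma reachB_mono P lam c B B' c' : B <= B' -> reachB P lam c B c' -> reachB P lam c B' c'.
Proof. by move=> HB [k [Hk H]]; exists k; split => //; lia. Qed.

Lemma read_entry_ok lam i : 0 < i -> i <= size lam ->
  read_entry lam (Posz i) = Posz (nth 0 lam i.-1).
Proof.
move=> H1 H2; rewrite /read_entry.
have -> : ((1 : int) <= Posz i)%R by rewrite lez_nat.
have -> : (Posz i <= Posz (size lam))%R by rewrite lez_nat.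
by rewrite /= subzn // subn1.
Qed.

Lemma read_entry_0 lam : read_entry lam (Posz 0) = Posz 0.
Proof. by []. Qed.

Definition code_at (P : program) (b : nat) (code : seq instr) :=
  b + size code <= size P /\ forall i, i < size code -> nth (IHalt 0) P (b + i) = nth (IHalt 0) code i.

Lemma stepR P lam b code i pc R k c' :
  code_at P b code -> i < size code -> pc = b + i ->
  reach P lam (exec (nth (IHalt 0) code i) lam pc R) k c' -> reach P lam (Run pc R) k.+1 c'.
Proof.
move=> [Hs Hn] Hi -> H; apply: reach_S; rewrite step_run; last lia.
by rewrite Hn.
Qed.

Arguments stepR {P lam b code} i {pc R k c'}.

Ltac st i := apply: (stepR i); [eassumption | by [] | lia | ].

Definition bs_code (b : nat) : seq instr :=
  [:: IJlt 2 3 (b+2); IJmp (b+13); IAdd 6 2 3; IAdd 6 6 1; IHalf 7 6; IRead 8 7;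
      IMul 9 7 4; IAdd 9 9 5; IJlt 8 9 (b+11); IAdd 2 7 0; IJmp b; ISub 3 7 1; IJmp b].

Definition bpred (lam : seq nat) (s j : int) (i : nat) : bool :=
  ~~ (Posz (nth 0 lam i.-1) < Posz i * s + j)%R.

Lemma bs_exit P lam b R lo hi :
  code_at P b (bs_code b) -> R 2 = Posz lo -> R 3 = Posz hi -> hi <= lo ->
  reach P lam (Run b R) 2 (Run (b+13) R).
Proof.
move=> Hc H2 H3 Hle.
st 0; rewrite /= H2 H3 ltz_nat ifF; last lia.
st 1; exact: reach0.
Qed.

Lemma bs_iter P lam b R lo hi s j :
  code_at P b (bs_code b) -> R 0 = 0%R -> R 1 = 1%R -> R 2 = Posz lo -> R 3 = Posz hi ->
  R 4 = s -> R 5 = j -> lo < hi -> hi <= size lam ->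
  exists R', reach P lam (Run b R) 10 (Run b R') /\ R' 0 = 0%R /\ R' 1 = 1%R /\ R' 4 = s /\ R' 5 = j /\
   (forall x, x \notin [:: 2;3;6;7;8;9] -> R' x = R x) /\
   (if bpred lam s j ((lo + hi).+1 %/ 2) then R' 2 = Posz ((lo + hi).+1 %/ 2) /\ R' 3 = Posz hi
    else R' 2 = Posz lo /\ R' 3 = Posz ((lo + hi).+1 %/ 2).-1).
Proof.
move=> Hc H0 H1 H2 H3 H4 H5 Hlt Hhi.
set mid := (lo + hi).+1 %/ 2.
have Hm1 : 0 < mid by rewrite /mid; lia.
have Hm2 : mid <= size lam by rewrite /mid; lia.
have Em : ((Posz lo + Posz hi + 1) %/ 2)%Z = Posz mid.
  by rewrite -[1%R]/(Posz 1) -!PoszD divz_nat addn1.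
have Ec : forall R0 : nat -> int, R0 8 = Posz (nth 0 lam mid.-1) -> R0 9 = (Posz mid * s + j)%R ->
   (R0 8 < R0 9)%R = ~~ bpred lam s j mid by move=> R0 -> ->; rewrite /bpred negbK.
case Eb: (bpred lam s j mid); (eexists; split;
 [ st 0; rewrite /= H2 H3 ltz_nat Hlt;
   st 2; rewrite /=; st 3; rewrite /=; st 4; rewrite /=; st 5; rewrite /=;
   st 6; rewrite /=; st 7; rewrite /=; st 8; rewrite /= Ec ?Eb /upd /=;
   [ try (st 9; rewrite /=; st 10; rewrite /=; exact: reach0);
     try (st 11; rewrite /=; st 12; rewrite /=; exact: reach0)
   | rewrite /= ?H0 ?H1 ?H2 ?H3 ?H4 ?H5 ?Em ?read_entry_ok //
   | rewrite /= ?H0 ?H1 ?H2 ?H3 ?H4 ?H5 ?Em ?read_entry_ok //]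
 | ]).
all: rewrite /upd /= H0 H1 H2 H3 H4 H5 Em; (split; [done|split; [done|split; [done|split; [done|split]]]]).
all: try (move=> x Hx; repeat (case: ifP => [/eqP E|_]; first by rewrite E in Hx); done).
- by rewrite addr0.
- by rewrite -[1%R]/(Posz 1) subzn // subn1.
Qed.

Lemma reach_B P lam c k c' : reach P lam c k c' -> reachB P lam c k c'.
Proof. by move=> H; exists k. Qed.

Arguments reachB_mono {P lam c} B {B' c'}.
Arguments reachB_trans {P lam c B1 c1 B2 c2}.
Arguments reach_B {P lam c k c'}.
Arguments bs_exit {P} lam {b R lo hi}.
Arguments bs_iter {P lam b R lo hi s j}.

Lemma bs_loop P lam b s j e : code_at P b (bs_code b) ->
 forall lo hi R, hi - lo < 2 ^ e -> lo <= hi -> hi <= size lam ->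
 R 0 = 0%R -> R 1 = 1%R -> R 2 = Posz lo -> R 3 = Posz hi -> R 4 = s -> R 5 = j ->
 exists res R', reachB P lam (Run b R) (10 * e + 2) (Run (b+13) R') /\
   R' 2 = Posz res /\ lo <= res <= hi /\ (res = lo \/ bpred lam s j res) /\
   (res = hi \/ ~~ bpred lam s j res.+1) /\
   R' 0 = 0%R /\ R' 1 = 1%R /\ (forall x, x \notin [:: 2;3;6;7;8;9] -> R' x = R x).
Proof.
move=> Hc; elim: e => [|e IH] lo hi R Hd Hle Hhi H0 H1 H2 H3 H4 H5.
  exists lo, R; split.
    apply: (reachB_mono 2); first lia.
    by apply: reach_B; apply: (bs_exit _ Hc H2 H3); move: Hd; rewrite expn0; lia.
  by do !split => //; try lia; left => //; move: Hd; rewrite expn0; lia.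
case: (ltnP lo hi) => Hlt; last first.
  exists lo, R; split.
    apply: (reachB_mono 2); first lia.
    by apply: reach_B; apply: (bs_exit _ Hc H2 H3).
  by do !split => //; try lia; left => //; lia.
have [R1 [Hr [R10 [R11 [R14 [R15 [Hpres Hif]]]]]]] := bs_iter Hc H0 H1 H2 H3 H4 H5 Hlt Hhi.
set mid := (lo + hi).+1 %/ 2 in Hif.
have Hd2 : hi - lo < 2 * 2 ^ e by rewrite -expnS.
case Eb: (bpred lam s j mid) Hif => -[E2 E3].
  have [res [R' [Hr' [Hres [Hb [Hlo [Hhi' [R'0 [R'1 Hp']]]]]]]]] :=
    IH mid hi R1 ltac:(rewrite /mid; lia) ltac:(rewrite /mid; lia) Hhi R10 R11 E2 E3 R14 R15.
  exists res, R'; split.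
    apply: (reachB_mono (10 + (10 * e + 2))); first lia.
    exact: (reachB_trans (reach_B Hr) Hr').
  do !split => //; try lia.
  - right; case: Hlo => [E|//]; by rewrite E.
  - by move=> x Hx; rewrite Hp' // Hpres.
have [res [R' [Hr' [Hres [Hb [Hlo [Hhi' [R'0 [R'1 Hp']]]]]]]]] :=
  IH lo mid.-1 R1 ltac:(rewrite /mid; lia) ltac:(rewrite /mid; lia) ltac:(rewrite /mid; lia) R10 R11 E2 E3 R14 R15.
exists res, R'; split.
  apply: (reachB_mono (10 + (10 * e + 2))); first lia.
  exact: (reachB_trans (reach_B Hr) Hr').
do !split => //; try lia.
- right; case: Hhi' => [E|//]; rewrite E prednK ?Eb //; rewrite /mid; lia.
- by move=> x Hx; rewrite Hp' // Hpres.
Qed.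

Definition eval_code : seq instr := [:: IJlt 10 14 85; IJlt 10 11 92; IJlt 1 10 82; IJmp 118; IJlt 14 15 118; IJlt 11 12 118; IJmp 116; IJlt 10 11 116; IAdd 21 14 0; IAdd 22 15 0; IAdd 23 16 0; IAdd 24 12 0; IAdd 25 13 0; IJmp 98; IAdd 21 11 0; IAdd 22 12 0; IAdd 23 13 0; IAdd 24 15 0; IAdd 25 16 0; IJmp 98; ISub 6 21 10; IPar 6 6; IJlt 6 1 111; IJlt 1 10 103; IJmp 120; IJlt 21 22 109; IJlt 10 24 118; IConst 18 (Posz 3); IJlt 10 18 120; IJlt 24 25 120; IJmp 118; IJlt 10 24 120; IJmp 116; IJlt 1 10 113; IJmp 118; IJlt 21 22 118; IJlt 10 24 118; IJmp 116; IConst 20 (Posz 0); IHalt 20; IConst 20 (Posz 1); IHalt 20; IConst 20 (Posz 2); IHalt 20].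
Definition prog : program :=
  [:: IConst 1 (Posz 1); IConst 2 (Posz 0); ILen 3; IConst 4 (Posz 1); IConst 5 (Posz 0)] ++ bs_code 5 ++
  [:: IAdd 10 2 0; IConst 2 (Posz 0); ILen 3; IConst 4 (Posz 0); IAdd 5 10 0] ++ bs_code 23 ++
  [:: IAdd 11 2 0; IConst 2 (Posz 0); ILen 3; ISub 5 10 1] ++ bs_code 40 ++
  [:: IAdd 12 2 0; IConst 2 (Posz 0); ILen 3; IConst 18 (Posz 2); ISub 5 10 18] ++ bs_code 58 ++
  [:: IAdd 13 2 0; IRead 14 10; ISub 17 10 1; IRead 15 17; IConst 18 (Posz 2); ISub 17 10 18; IRead 16 17] ++ eval_code.

Lemma stepB' P lam pc ins R B c' :
  pc < size P -> nth (IHalt 0) P pc = ins ->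
  reachB P lam (exec ins lam pc R) B c' -> reachB P lam (Run pc R) B.+1 c'.
Proof. by move=> H1 H2 H; apply: reachB_S; rewrite step_run // H2. Qed.

Ltac stepP := match goal with |- reachB prog _ (Run ?pc _) _ _ =>
  let ins := eval vm_compute in (nth (IHalt 0) prog pc) in
  apply: (@stepB' prog _ pc ins); [reflexivity | reflexivity | rewrite /exec /upd /=] end.

Lemma reachB_done P lam v w B : v = w -> reachB P lam (Done v) B (Done w).
Proof. by move=> ->; exact: reachB0. Qed.

Lemma eval_ok lam R d x2 x1 x0 y2 y1 y0 :
  R 0 = Posz 0 -> R 1 = Posz 1 -> R 10 = Posz d -> R 14 = Posz x0 -> R 15 = Posz x1 -> R 16 = Posz x2 ->
  R 11 = Posz y0 -> R 12 = Posz y1 -> R 13 = Posz y2 -> 0 < d -> d <= x0 -> d <= y0 ->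
  reachB prog lam (Run 78 R) 30 (Done (Posz (Fm d x2 x1 x0 y2 y1 y0))).
Proof.
move=> H0 H1 HD HX0 HX1 HX2 HY0 HY1 HY2 Hd Hx Hy.
have Sx : (Posz x0 - Posz d)%R = Posz (x0 - d) by rewrite subzn.
have Sy : (Posz y0 - Posz d)%R = Posz (y0 - d) by rewrite subzn.
repeat (first [ stepP; rewrite ?H0 ?H1 ?HD ?HX0 ?HX1 ?HX2 ?HY0 ?HY1 ?HY2 ?Sx ?Sy ?modz_nat ?ltz_nat
              | case: ifP => ? ]).
all: apply: reachB_done; congr Posz; rewrite /Fm /Gm; crush.
Qed.


Lemma code5 : code_at prog 5 (bs_code 5). Proof. split; [by [] | move=> i Hi; do 13 (case: i Hi => [|i] Hi; [by [] | ]); by []]. Qed.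
Lemma code23 : code_at prog 23 (bs_code 23). Proof. split; [by [] | move=> i Hi; do 13 (case: i Hi => [|i] Hi; [by [] | ]); by []]. Qed.
Lemma code40 : code_at prog 40 (bs_code 40). Proof. split; [by [] | move=> i Hi; do 13 (case: i Hi => [|i] Hi; [by [] | ]); by []]. Qed.
Lemma code58 : code_at prog 58 (bs_code 58). Proof. split; [by [] | move=> i Hi; do 13 (case: i Hi => [|i] Hi; [by [] | ]); by []]. Qed.

Lemma bpred_d lam i : bpred lam (Posz 1) (Posz 0) i = (i <= Rr lam i).
Proof. by rewrite /bpred /Rr mulr1 addr0 ltz_nat -leqNgt. Qed.

Lemma bpred_c lam (j : nat) i : bpred lam (Posz 0) (Posz j) i = (j <= Rr lam i).
Proof. by rewrite /bpred /Rr mulr0 add0r ltz_nat -leqNgt. Qed.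

Lemma read_entry_abs lam i : read_entry lam i = Posz (absz (read_entry lam i)).
Proof. by rewrite /read_entry; case: ifP. Qed.

Lemma C_from_spec lam j res : pt lam -> 0 < j -> res <= size lam ->
  (res = 0 \/ j <= Rr lam res) -> (res = size lam \/ ~~ (j <= Rr lam res.+1)) ->
  res = Cc lam j.
Proof.
move=> Hp Hj Hr H1 H2.
have Hc : Cc lam j <= size lam by rewrite /Cc count_size.
apply/eqP; rewrite eqn_leq; apply/andP; split.
  case: H1 => [->//|H1]; case: (posnP res) => [->//|Hres].
  by rewrite -conjP.
case: H2 => [->//|H2].
rewrite leqNgt; apply/negP => H; move: H2; rewrite conjP //; lia.
Qed.

Arguments bs_loop {P lam b s j e}.

Lemma prog_run lam : pt lam -> lam != [::] ->
  exists d x2 x1 x0 y2 y1 y0,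
    reachB prog lam init (64 + 40 * (trunc_log 2 (size lam)).+1) (Done (Posz (Fm d x2 x1 x0 y2 y1 y0))) /\
    0 < d /\ d <= Rr lam d /\ Rr lam d.+1 <= d /\ x0 = Rr lam d /\ y0 = Cc lam d /\
    (1 < d -> x1 = Rr lam (d-1) /\ y1 = Cc lam (d-1)) /\
    (2 < d -> x2 = Rr lam (d-2) /\ y2 = Cc lam (d-2)).
Proof.
move=> Hp Hne.
set r := size lam; set E := (trunc_log 2 r).+1.
have Hr : r < 2 ^ E by apply: trunc_log_ltn.
have Hr1 : 0 < r by rewrite /r; case: (lam) Hne.
have Hhead : 1 <= Rr lam 1.
  by case: (lam) Hp Hne => //= x s /andP[_ /andP[Hx _]].
have [R1 [HA [R10 [R11 [R12 [R13 [R14 R15]]]]]]] : exists R1, reachB prog lam init 5 (Run 5 R1) /\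
   R1 0 = Posz 0 /\ R1 1 = Posz 1 /\ R1 2 = Posz 0 /\ R1 3 = Posz r /\ R1 4 = Posz 1 /\ R1 5 = Posz 0.
  eexists; split; first by rewrite /init; do 5 stepP; exact: reachB0.
  by rewrite /upd /=.
have [d [R2 [HB1 [R22 [Hdr [Hd0 [Hdr1 [R20 [R21 HP2]]]]]]]]] :=
  @bs_loop prog lam 5 (Posz 1) (Posz 0) E code5 0 r R1 ltac:(lia) ltac:(lia) (leqnn _) R10 R11 R12 R13 R14 R15.
rewrite !bpred_d in Hd0 Hdr1.
have Hdpos : 0 < d.
  case: (posnP d) Hdr1 => // -> [E0|/negP]; [lia | by []].
have HdR : d <= Rr lam d by case: Hd0 => // E0; lia.
have HdR1 : Rr lam d.+1 <= d.
  case: Hdr1 => [E0|]; last lia.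
  by rewrite /Rr /= nth_default // -/r; lia.
have Hdr' : d <= r by lia.
have [R3 [HB [R30 [R31 [R32 [R33 [R34 [R35 R310]]]]]]]] : exists R3, reachB prog lam (Run 18 R2) 5 (Run 23 R3) /\
   R3 0 = Posz 0 /\ R3 1 = Posz 1 /\ R3 2 = Posz 0 /\ R3 3 = Posz r /\ R3 4 = Posz 0 /\ R3 5 = Posz d /\ R3 10 = Posz d.
  eexists; split; first by do 5 stepP; exact: reachB0.
  by rewrite /upd /= R22 R20 R21 !addr0.
have [y0 [R4 [HB2 [R42 [Hy0r [Hy00 [Hy0r1 [R40 [R41 HP4]]]]]]]]] :=
  @bs_loop prog lam 23 (Posz 0) (Posz d) E code23 0 r R3 ltac:(lia) ltac:(lia) (leqnn _) R30 R31 R32 R33 R34 R35.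
rewrite !bpred_c in Hy00 Hy0r1.
have Ey0 : y0 = Cc lam d by apply: C_from_spec => //; lia.
have [R5 [HC [R50 [R51 [R52 [R53 [R54 [R55 [R510 R511]]]]]]]]] : exists R5, reachB prog lam (Run 36 R4) 4 (Run 40 R5) /\
   R5 0 = Posz 0 /\ R5 1 = Posz 1 /\ R5 2 = Posz 0 /\ R5 3 = Posz r /\ R5 4 = Posz 0 /\
   R5 5 = (Posz d - 1)%R /\ R5 10 = Posz d /\ R5 11 = Posz y0.
  eexists; split; first by do 4 stepP; exact: reachB0.
  by rewrite /upd /= R42 R40 R41 !HP4 // R34 R310 !addr0.
have [y1 [R6 [HB3 [R62 [Hy1r [Hy10 [Hy1r1 [R60 [R61 HP6]]]]]]]]] :=
  @bs_loop prog lam 40 (Posz 0) (Posz d - 1)%R E code40 0 r R5 ltac:(lia) ltac:(lia) (leqnn _) R50 R51 R52 R53 R54 R55.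
have [R7 [HD [R70 [R71 [R72 [R73 [R74 [R75 [R710 [R711 R712]]]]]]]]]] : exists R7,
   reachB prog lam (Run 53 R6) 5 (Run 58 R7) /\
   R7 0 = Posz 0 /\ R7 1 = Posz 1 /\ R7 2 = Posz 0 /\ R7 3 = Posz r /\ R7 4 = Posz 0 /\
   R7 5 = (Posz d - Posz 2)%R /\ R7 10 = Posz d /\ R7 11 = Posz y0 /\ R7 12 = Posz y1.
  eexists; split; first by do 5 stepP; exact: reachB0.
  by rewrite /upd /= R62 R60 R61 !HP6 // R54 R510 R511 !addr0.
have [y2 [R8 [HB4 [R82 [Hy2r [Hy20 [Hy2r1 [R80 [R81 HP8]]]]]]]]] :=
  @bs_loop prog lam 58 (Posz 0) (Posz d - Posz 2)%R E code58 0 r R7 ltac:(lia) ltac:(lia) (leqnn _) R70 R71 R72 R73 R74 R75.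
set x1 := absz (read_entry lam (Posz d - 1)%R).
set x2 := absz (read_entry lam (Posz d - Posz 2)%R).
have [R9 [HE [R90 [R91 [R910 [R911 [R912 [R913 [R914 [R915 R916]]]]]]]]]] : exists R9,
   reachB prog lam (Run 71 R8) 7 (Run 78 R9) /\
   R9 0 = Posz 0 /\ R9 1 = Posz 1 /\ R9 10 = Posz d /\ R9 11 = Posz y0 /\ R9 12 = Posz y1 /\
   R9 13 = Posz y2 /\ R9 14 = Posz (Rr lam d) /\ R9 15 = Posz x1 /\ R9 16 = Posz x2.
  eexists; split; first by do 7 stepP; exact: reachB0.
  rewrite /upd /= R82 R80 R81 !HP8 // R710 R711 R712.
  do !split => //.
  - by rewrite addr0.
  - rewrite read_entry_ok //; lia.
  - by rewrite [LHS]read_entry_abs.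
  - by rewrite [LHS]read_entry_abs.
have Hev := eval_ok lam R9 d x2 x1 (Rr lam d) y2 y1 y0 R90 R91 R910 R914 R915 R916 R911 R912 R913 Hdpos HdR
  ltac:(rewrite Ey0 -conjP //).
exists d, x2, x1, (Rr lam d), y2, y1, y0; split.
  apply: (reachB_mono (5 + (10 * E + 2) + (5 + (10 * E + 2) + (4 + (10 * E + 2) + (5 + (10 * E + 2) + (7 + 30)))))).
    rewrite /E; lia.
  apply: (reachB_trans HA); apply: (reachB_trans HB1).
  apply: (reachB_trans HB); apply: (reachB_trans HB2).
  apply: (reachB_trans HC); apply: (reachB_trans HB3).
  apply: (reachB_trans HD); apply: (reachB_trans HB4).
  apply: (reachB_trans HE); exact: Hev.
do !split => //.
- rewrite /x1 -[1%R]/(Posz 1) subzn; last lia.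
  rewrite read_entry_ok //; lia.
- have Ej : (Posz d - 1)%R = Posz (d - 1) by rewrite -[1%R]/(Posz 1) subzn //; lia.
  rewrite Ej !bpred_c in Hy10 Hy1r1.
  by apply: C_from_spec => //; lia.
- rewrite /x2 subzn; last lia.
  rewrite read_entry_ok //; lia.
- have Ej : (Posz d - Posz 2)%R = Posz (d - 2) by rewrite subzn //; lia.
  rewrite Ej !bpred_c in Hy20 Hy2r1.
  by apply: C_from_spec => //; lia.
Qed.

Lemma size_le_sumn lam : all (fun x => 0 < x) lam -> size lam <= sumn lam.
Proof. elim: lam => //= x s IH /andP[Hx Hs]; have := IH Hs; lia. Qed.

Theorem mainTheorem15 :
  exists (P : program) (C : nat),
    forall (n : nat) (lam : seq nat),
      (1 <= n)%N -> is_partition n lam ->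
      exists t : nat,
        [/\ halts_in P lam t (Posz (SG_LCTR lam)),
            (t <= C * (trunc_log 2 (size lam)).+1)%N
          & (t <= C * (trunc_log 2 n).+1)%N].
Proof.
exists prog, 104 => n lam Hn /and3P[Hs Hpos /eqP Hsum].
have Hp : pt lam by apply/andP.
have Hne : lam != [::] by case: lam Hsum {Hs Hpos Hp} => //= Hs0; lia.
have [d [x2 [x1 [x0 [y2 [y1 [y0 [[k [Hk Hreach]] [Hd [H1 [H2 [Ex0 [Ey0 [E1 E2]]]]]]]]]]]]]] :=
  prog_run lam Hp Hne.
have Hsz : size lam <= n by rewrite -Hsum; exact: size_le_sumn.
have Htl := leq_trunc_log 2 Hsz.
exists k; split.
- have -> : SG_LCTR lam = Fm d x2 x1 x0 y2 y1 y0.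
    rewrite (SG_Fm lam d Hp Hd H1 H2) /FF Ex0 Ey0.
    apply: Fm_congr => H.
    + by have [] := E2 H.
    + by have [] := E2 H.
    + by have [] := E1 H.
    + by have [] := E1 H.
  exact: Hreach.
- lia.
- lia.
Qed.
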